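(* Let $\mathcal C$ be a linear $[n,k]$ MDS code over $F$ and let $L\in\mathbb Z^+$ satisfy $L\le\binom{n-1}{k-1}$. If $\mathcal C$ is strongly-$(\tau,L)$-list decodable (for some nonnegative $\tau\in\frac{1}{L+1}\mathbb Z$), then $\tau\le\frac{L(n-k)}{L+1}$.
   Context: $F=\mathrm{GF}(q)$; $\mathsf w(\cdot)$ denotes Hamming weight. For $L\in\mathbb Z^+$ and nonnegative $\tau\in\frac{1}{L+1}\mathbb Z$ (rationals of the form $b/(L+1)$, $b\in\mathbb Z$), a code $\mathcal C\subseteq F^n$ is strongly-$(\tau,L)$-list decodable if there do not exist $y\in F^n$ and $L+1$ distinct codewords $c_0,\dots,c_L\in\mathcal C$ with $\sum_{m=0}^{L}\mathsf w(y-c_m)\le(L+1)\tau$. *)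

(* Defs.v *)
From mathcomp Require Import all_boot all_order all_algebra.
Set Implicit Arguments. Unset Strict Implicit. Unset Printing Implicit Defensive.
Import GRing.Theory Num.Theory.
Local Open Scope ring_scope.

Definition hweight (F : finFieldType) (n : nat) (v : 'rV[F]_n) : nat :=
  #|[set i : 'I_n | v 0 i != 0]|.

Definition is_MDS (F : finFieldType) (n : nat) (C : {vspace 'rV[F]_n}) (k : nat) : Prop :=
  \dim C = k /\ forall c : 'rV[F]_n, c \in C -> c != 0 -> (n - k + 1 <= hweight c)%N.

Definition strongly_list_decodable (F : finFieldType) (n : nat)
    (C : {vspace 'rV[F]_n}) (tau : rat) (L : nat) : Prop :=
  ~ exists (y : 'rV[F]_n) (c : 'I_L.+1 -> 'rV[F]_n),
      injective c /\ (forall m, c m \in C) /\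
      ((\sum_(m < L.+1) hweight (y - c m))%:R <= (L.+1)%:R * tau :> rat).

(* Main.v *)
Require Import Defs.
From mathcomp Require Import all_boot all_order all_algebra.
From mathcomp Require Import finfield zify.
Import Order.TTheory GRing.Theory Num.Theory.
Local Open Scope ring_scope.

Lemma exists_supp (F : finFieldType) (n k : nat) (C : {vspace 'rV[F]_n})
  (S : {set 'I_n}) :
  \dim C = k -> (0 < k)%N -> (n - k + 1 <= #|S|)%N -> (k <= n)%N ->
  exists c : 'rV[F]_n, [/\ c \in C, c != 0 & forall j, j \notin S -> c 0 j = 0].
Proof.
move=> dC k0 hS kn.
set D := ~: S.
have cD : (#|D| <= k.-1)%N.
  rewrite cardsCs setCK card_ord; lia.
pose g (c : 'rV[F]_n) := [ffun j : 'I_#|D| => c 0 (enum_val j)].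
have : [exists p : 'rV[F]_n * 'rV[F]_n,
    [&& p.1 \in C, p.2 \in C, p.1 != p.2 & g p.1 == g p.2]].
  apply: contraT => /existsPn H.
  have inj : {in C &, injective g}.
    move=> x y xC yC gxy; apply/eqP/negPn/negP => nxy.
    by have := H (x, y); rewrite /= xC yC nxy gxy eqxx.

  have := card_in_imset inj; rewrite card_vspace dC => e.
  have : (#|g @: C| <= #|F| ^ k.-1)%N.
    apply: leq_trans (max_card _) _; rewrite card_ffun card_ord.
    by apply: leq_pexp2l => //; apply/card_gt0P; exists 0.
  move=> h; have := leq_trans (eq_leq (esym e)) h; have q2 : (1 < #|F|)%N.
    by apply/card_gt1P; exists 0, 1; rewrite eq_sym oner_neq0.
  move=> h2; suff : (#|F|^k.-1 < #|F|^k)%N by rewrite ltnNge h2.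
  by rewrite -(prednK k0) /= expnS ltn_Pmull // expn_gt0 (ltnW q2).
case/existsP => [[c1 c2]] /and4P [/= c1C c2C ne /eqP geq].
exists (c1 - c2); split.
- by rewrite rpredB.
- by rewrite subr_eq0.
- move=> j jS; have jD : j \in D by rewrite inE.
  move/ffunP: geq => /(_ (enum_rank_in jD j)).
  rewrite !ffunE enum_rankK_in // => e.
  by rewrite !mxE e subrr.
Qed.

Lemma hw_le (F : finFieldType) (n : nat) (v : 'rV[F]_n) (A : {set 'I_n}) :
  (forall j, j \notin A -> v 0 j = 0) -> (hweight v <= #|A|)%N.
Proof.
move=> H; apply: subset_leq_card; apply/subsetP => j; rewrite inE.
by apply: contraR => /H ->; rewrite eqxx.
Qed.

Lemma dim_le (F : finFieldType) (n : nat) (C : {vspace 'rV[F]_n}) : (\dim C <= n)%N.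
Proof.
by have := dimvS (subvf C); rewrite dimvf /dim /= mul1n.
Qed.

Theorem mainTheorem7 (F : finFieldType) (n k : nat) (C : {vspace 'rV[F]_n})
  (L : nat) (tau : rat) :
  is_MDS C k -> (0 < k)%N ->
  (0 < L)%N -> (L <= 'C(n.-1, k.-1))%N ->
  0 <= tau -> (exists b : int, tau * (L.+1)%:R = b%:~R) ->
  strongly_list_decodable C tau L ->
  tau <= (L * (n - k))%:R / (L.+1)%:R.
Proof.
move=> [dC mds] k0 L0 Lle tau0 [b hb] sld.
have kn : (k <= n)%N by rewrite -dC dim_le.
have n0 : (0 < n)%N by apply: leq_trans kn.
pose i0 : 'I_n := Ordinal n0.
pose Fam := [set A : {set 'I_n} | A \subset [set~ i0] & #|A| == (n - k)%N].
have cardFam : #|Fam| = 'C(n.-1, k.-1).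
  rewrite cards_draws cardsC1 card_ord -bin_sub; last by lia.
  congr 'C(_, _); lia.
pose P (A : {set 'I_n}) (c : 'rV[F]_n) :=
  [&& c \in C, c 0 i0 == 1 & [forall j, (j \notin i0 |: A) ==> (c 0 j == 0)]].
pose cw A := odflt 0 [pick c | P A c].
have famP A : A \in Fam -> i0 \notin A /\ #|A| = (n - k)%N.
  rewrite inE => /andP [/subsetP sA /eqP cA]; split => //.
  by apply/negP => /sA; rewrite !inE eqxx.
have cwP A : A \in Fam -> P A (cw A).
  move=> /famP [iA cA].
  have [c [cC c0 cS]] : exists c : 'rV[F]_n,
      [/\ c \in C, c != 0 & forall j, j \notin i0 |: A -> c 0 j = 0].
    by apply: (exists_supp _ _ _ _ _ dC k0) => //; rewrite cardsU1 iA cA; lia.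
  have ci : c 0 i0 != 0.
    apply/negP => /eqP ci.
    have := mds c cC c0.
    have : (hweight c <= #|A|)%N.
      apply: hw_le => j jA; case: (j =P i0) => [->//|/eqP ji].
      by apply: cS; rewrite !inE negb_or ji.
    rewrite cA; lia.
  rewrite /cw; case: pickP => [x -> //|/(_ ((c 0 i0)^-1 *: c))].
  rewrite /P rpredZ // mxE mulVf // eqxx /=.
  move/negbT/forallPn => [j]; rewrite negb_imply => /andP [jS].
  by rewrite [X in X != 0]mxE (cS j) // mulr0 eqxx.
have cw1 A : A \in Fam -> cw A 0 i0 = 1.
  by move=> /cwP /and3P [_ /eqP -> _].
have cw0 A j : A \in Fam -> j \notin i0 |: A -> cw A 0 j = 0.
  by move=> /cwP /and3P [_ _ /forallP /(_ j) /implyP H] /H /eqP.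
have cwC A : A \in Fam -> cw A \in C by move=> /cwP /and3P [].
have cwinj : {in Fam &, injective cw}.
  move=> A B AF BF eAB; apply/eqP; rewrite eqEcard.
  have [cA cB] := (famP A AF, famP B BF).
  rewrite cA.2 cB.2 leqnn andbT.
  apply/negPn/negP => nAB.
  have : (#|A :&: B| < #|A|)%N.
    apply: proper_card; rewrite properE subsetIl /=.
    by rewrite subsetI subxx.
  have : (n - k + 1 <= hweight (cw A))%N.
    apply: mds; first exact: cwC.
    by apply/negP => /eqP e; have := cw1 A AF; rewrite e mxE => /eqP; rewrite eq_sym oner_eq0.
  have : (hweight (cw A) <= #|i0 |: (A :&: B)|)%N.
    apply: hw_le => j; rewrite !inE negb_or => /andP [ji jAB].
    case: (boolP (j \in A)) => jA.
      by rewrite eAB; apply: cw0 => //; rewrite !inE negb_or ji; move: jAB; rewrite jA.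
    by apply: cw0 => //; rewrite !inE negb_or ji.
  rewrite cardsU1 cA.2; set x := #|A :&: B|; set h := hweight _; case: (_ \notin _) => /= h1 h2 h3; rewrite ?add1n ?add0n in h1; clearbody x h; clear -h1 h2 h3; lia.
rewrite ler_pdivlMr ?ltr0Sn // hb.
rewrite -[((L * (n - k))%:R : rat)]/(((L * (n - k))%:Z)%:~R : rat) ler_int.
rewrite leNgt; apply/negP => hlt.
apply: sld.
have HL : (L <= #|Fam|)%N by rewrite cardFam.
pose Aof (m : 'I_L) : {set 'I_n} := enum_val (A := mem Fam) (widen_ord HL m).
have AofF m : Aof m \in Fam by apply: enum_valP.
have Aofinj : injective Aof.
  by move=> m1 m2 /enum_val_inj /(congr1 val) /= /val_inj.
pose y : 'rV[F]_n := \row_j (j == i0)%:R.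
pose c (m : 'I_L.+1) := if unlift ord0 m is Some m' then cw (Aof m') else 0.
exists y, c; split; [|split].
- move=> m1 m2; rewrite /c.
  case: (unliftP ord0 m1) => [m1' ->|->]; case: (unliftP ord0 m2) => [m2' ->|->] //.
  + by move/(cwinj _ _ (AofF _) (AofF _))/Aofinj => ->.
  + by move=> e; have := cw1 _ (AofF m1'); rewrite e mxE => /eqP; rewrite eq_sym oner_eq0.
  + by move=> e; have := cw1 _ (AofF m2'); rewrite -e mxE => /eqP; rewrite eq_sym oner_eq0.
- by move=> m; rewrite /c; case: (unlift _ _) => [m'|]; [apply: cwC | rewrite rpred0].
have hs : (\sum_(m < L.+1) hweight (y - c m) <= (L * (n - k)).+1)%N.
  rewrite big_ord_recl.
  have -> : hweight (y - c ord0) = 1%N.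
    rewrite /c unlift_none subr0 /hweight.
    rewrite -[RHS](cards1 i0); apply: eq_card => j; rewrite !inE mxE.
    by case: (j =P i0) => _; rewrite ?oner_eq0 ?eqxx.
  rewrite add1n ltnS -[X in (_ <= X * _)%N](card_ord L) -sum_nat_const.
  apply: leq_sum => m _; rewrite /c liftK.
  have [iA cA] := famP _ (AofF m).
  rewrite -cA; apply: hw_le => j jA; rewrite !mxE.
  case: (j =P i0) => [->|/eqP ji]; first by rewrite cw1 ?subrr.
  by rewrite cw0 ?subrr // !inE negb_or ji.
rewrite mulrC hb -[(_%:R : rat)]/((_%:Z)%:~R : rat) ler_int.
apply: le_trans (_ : ((L * (n - k)).+1 : int) <= b).
  by rewrite lez_nat.
by rewrite -addn1 PoszD lezD1.
Qed.
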